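(* Let $\Lambda$ denote the von Mangoldt function and let $\varepsilon>0$ be a small number. Then, as $x\to\infty$, \[ \sum_{n\leq x} \Lambda\left( [x/n]^2+1 \right) = a_2 x + O\left( x^{(2+\varepsilon)/3}\log^2 x \right), \] where the density constant is \[ a_2=\sum_{n\geq 1}\frac{\Lambda(n^2+1)}{n(n+1)}\geq 0.900076. \]
   Context: $[t]$ denotes the largest integer not exceeding $t$. The von Mangoldt function is $\Lambda(m)=\log p$ if $m=p^k$ for a prime $p$ and an integer $k\geq 1$, and $\Lambda(m)=0$ otherwise. The sum is over positive integers $n\le x$. *)

(* Defs.v *)
From HB Require Import structures.
From mathcomp Require Import all_boot all_order all_algebra.
From mathcomp Require Import all_classical all_reals all_analysis.
Set Implicit Arguments. Unset Strict Implicit. Unset Printing Implicit Defensive.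
Import Order.TTheory GRing.Theory Num.Theory numFieldNormedType.Exports.
Local Open Scope ring_scope.

(* von Mangoldt: Lambda(m) = log p if m = p^k, p prime, k >= 1, else 0.
   Written as a sum over all representations m = p^k (there is at most one). *)
Definition vonMangoldt (R : realType) (m : nat) : R :=
  \sum_(p < m.+1 | prime p) \sum_(1 <= k < m.+1 | (p ^ k == m)%N) ln (p%:R : R).

Definition flr (R : realType) (t : R) : nat := Num.truncn t.

Definition S2 (R : realType) (x : R) : R :=
  \sum_(1 <= n < (flr x).+1) vonMangoldt R ((flr (x / n%:R)) ^ 2 + 1)%N.

Definition a2_term (R : realType) (n : nat) : R :=
  vonMangoldt R (n ^ 2 + 1)%N / (n * n.+1)%:R.

(* Main.v *)
From Stdlib Require Import PeanoNat.
Require Import Defs.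
From HB Require Import structures.
From mathcomp Require Import all_boot all_order all_algebra.
From mathcomp Require Import all_classical all_reals all_analysis.
From mathcomp Require Import ring lra zify.
Import Order.TTheory GRing.Theory Num.Theory numFieldNormedType.Exports.
Local Open Scope ring_scope.
Section VM.
Variable R : realType.

Lemma sum_nat_eq1 (a b k : nat) (c : R) : (a <= k < b)%N ->
  \sum_(a <= i < b) (if i == k then c else 0) = c.
Proof.
move=> /andP[ak kb].
have kb' := ltnW kb.
rewrite (@big_cat_nat _ _ _ k a b) //= [X in _ + X]big_ltn // eqxx.
rewrite big1_seq; last first.
  move=> i /andP[_]; rewrite mem_index_iota => /andP[ia ik].
  by rewrite ifN // ltn_eqF.
rewrite big1_seq ?addr0 ?add0r //.
move=> i /andP[_]; rewrite mem_index_iota => /andP[ia ik].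
by rewrite ifN // gtn_eqF.
Qed.

Lemma vM_pow (p k : nat) : prime p -> (0 < k)%N ->
  vonMangoldt R (p ^ k) = ln (p%:R).
Proof.
move=> pp k0; rewrite /vonMangoldt.
set m := (p ^ k)%N.
have p1 := prime_gt1 pp.
have pm : (p <= m)%N by rewrite /m -{1}(expn1 p) leq_pexp2l // ltnW.
have km : (k < m)%N by rewrite /m ltn_expl.
rewrite big_mkcond /=.
rewrite -(big_mkord xpredT (fun q => if prime q then
   \sum_(1 <= k0 < m.+1 | (q ^ k0)%N == m) ln (q%:R : R) else 0)).
transitivity (\sum_(0 <= q < m.+1) (if q == p then ln (p%:R : R) else 0)).
  apply: eq_bigr => q _.
  case: ifP => qp; last first.
    by case: eqP => // qE; move: qp; rewrite qE pp.
  rewrite big_mkcond /=.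
  case: eqP => [->|qnp].
    transitivity (\sum_(1 <= j < m.+1) (if j == k then ln (p%:R : R) else 0)).
      by apply: eq_bigr => j _; rewrite /m eqn_exp2l.
    by rewrite sum_nat_eq1 // k0 ltnS ltnW.
  rewrite big1_seq // => j /andP[_]; rewrite mem_index_iota => /andP[j1 _].
  case: eqP => // qjm.
  exfalso; apply: qnp; apply/eqP; rewrite -dvdn_prime2 //.
  have : (q %| m)%N by rewrite -qjm dvdn_exp.
  by rewrite /m Euclid_dvdX // => /andP[].
by rewrite sum_nat_eq1 // ltnS pm.
Qed.

Lemma vM_ge0 (m : nat) : 0 <= vonMangoldt R m.
Proof.
rewrite /vonMangoldt; apply: sumr_ge0 => q qp; apply: sumr_ge0 => j _.
by apply: ln_ge0; rewrite ler1n prime_gt0.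
Qed.

Lemma vM_le (m : nat) : vonMangoldt R m <= ln (m%:R).
Proof.
case: m => [|m]. 
  by rewrite /vonMangoldt big_mkcond big_ord_recl big_ord0 /= ln0 // addr0.
have [[p [k [pp [k0 pk]]]]|] := pselect (exists p k, prime p /\ (0 < k)%N /\ (p ^ k)%N = m.+1).
  have p0 := prime_gt0 pp.
  rewrite -pk vM_pow // ler_ln ?posrE ?ltr0n ?expn_gt0 ?p0 //.
  by rewrite ler_nat -{1}(expn1 p) leq_pexp2l // prime_gt0.
move=> H; rewrite /vonMangoldt big1; first by apply: ln_ge0; rewrite ler1n.
move=> q qp; rewrite big1_seq // => j /andP[/eqP qj]; rewrite mem_index_iota => /andP[j1 _].
by exfalso; apply: H; exists q, j.
Qed.
End VM.
Section Bounds.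
Variable R : realType.
Local Notation f m := (vonMangoldt R (m ^ 2 + 1)%N).

Lemma ln_lb (a b : R) : 0 < a -> 0 < b -> 1 - b / a <= ln a - ln b.
Proof.
move=> a0 b0.
have h : ln (1 + (b / a - 1)) <= b / a - 1.
  apply: le_ln1Dx; have : 0 < b / a by rewrite divr_gt0.
  lra.
move: h; rewrite addrC subrK ln_div ?posrE //; lra.
Qed.

Lemma ln2_le1 : ln (2 : R) <= 1.
Proof.
have h : ln (1 + 1 : R) <= 1 by apply: le_ln1Dx; lra.
by move: h; have -> : (1 + 1 : R) = 2 by lra.
Qed.

Lemma ln_nat_ge0 (m : nat) : 0 <= ln (m%:R : R).
Proof. by case: m => [|m]; [rewrite ln0 | apply: ln_ge0; rewrite ler1n]. Qed.

Lemma f_ge0 m : 0 <= f m.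
Proof. exact: vM_ge0. Qed.

Lemma f_le m : (0 < m)%N -> f m <= 1 + 2 * ln (m%:R : R).
Proof.
move=> m0; apply: (le_trans (vM_le _ _)).
have m0' : (0 : R) < m%:R by rewrite ltr0n.
apply: (@le_trans _ _ (ln (2 * (m%:R : R) ^+ 2))).
  rewrite ler_ln ?posrE ?ltr0n ?addn1 // ?mulr_gt0 ?exprn_gt0 //.
  rewrite -natrX -natrM ler_nat -addn1 mul2n -addnn leq_add2l.
  by rewrite expn_gt0 m0.
rewrite lnM ?posrE ?exprn_gt0 // lnXn //.
have := ln2_le1; lra.
Qed.

Definition g (m : nat) : R := (4 + 2 * ln (m%:R : R)) / m%:R.

Lemma g_ge0 m : 0 <= g m.
Proof.
rewrite /g; apply: divr_ge0 => //; have := ln_nat_ge0 m; lra.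
Qed.

Lemma term_le m : (0 < m)%N -> a2_term R m <= g m - g m.+1.
Proof.
move=> m0; rewrite /a2_term /g.
have m0' : (0 : R) < m%:R by rewrite ltr0n.
set L0 := ln (m%:R : R); set L1 := ln (m.+1%:R : R).
have H : L1 - L0 <= 1 / m%:R.
  have := @le_ln1Dx R (1 / m%:R).
  rewrite /L1 /L0 -ln_div ?posrE ?ltr0n //.
  have -> : (m.+1%:R / m%:R : R) = 1 + 1 / m%:R.
    by rewrite -addn1 natrD mulrDl divff ?gt_eqF // addrC mul1r.
  apply; have : (0:R) <= 1 / m%:R by rewrite divr_ge0.
  lra.
have H' : m%:R * (L1 - L0) <= 1.
  by rewrite -(ler_pdivlMl _ _ m0') mulrC.
have L00 : 0 <= L0 := ln_nat_ge0 m.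
have fle := f_le m m0.
have E : (4 + 2 * L0) / m%:R - (4 + 2 * L1) / m.+1%:R
       = (4 + 2 * L0 - 2 * (m%:R * (L1 - L0))) / (m * m.+1)%:R.
  rewrite natrM -addn1 natrD; field.
  by rewrite !gt_eqF // ltr_pwDl.
rewrite E; apply: ler_wpM2r; first by rewrite invr_ge0.
move: fle; rewrite -/L0; lra.
Qed.

Definition A (n : nat) : R := series (fun k => a2_term R k.+1) n.

Lemma A_nd : nondecreasing_seq A.
Proof.
apply/nondecreasing_seqP => n; rewrite /A /series /= big_nat_recr //=.
rewrite lerDl /a2_term; apply: divr_ge0 => //; exact: f_ge0.
Qed.

Lemma A_diff K n : (K <= n)%N -> A n - A K <= g K.+1 - g n.+1.
Proof.
move=> Kn; rewrite /A /series /= (@big_cat_nat _ _ _ K 0 n) // /= addrC addrK.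
have -> : g K.+1 - g n.+1 = \sum_(K <= k < n) ((- g k.+2) - (- g k.+1)).
  by rewrite (telescope_sumr (fun k => - g k.+1)) //; lra.
apply: ler_sum_nat => k _; rewrite opprK addrC; exact: term_le.
Qed.

Lemma A_cvg : cvgn A.
Proof.
apply: nondecreasing_is_cvgn; first exact: A_nd.
exists (g 1) => _ [n _ <-].
have := @A_diff 0 n (leq0n n); have := g_ge0 n.+1.
rewrite /A /series /= [\sum_(0 <= k < 0) _]big_geq //; lra.
Qed.

Lemma A_le_lim n : A n <= limn A.
Proof. exact: nondecreasing_cvgn_le A_nd A_cvg n. Qed.

Lemma lim_le K : limn A <= A K + g K.+1.
Proof.
apply: limr_le; first exact: A_cvg.
exists K => // n /= Kn.
have := @A_diff K n Kn; have := g_ge0 n.+1; lra.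
Qed.
End Bounds.
Section Comb.
Variable R : realType.

Lemma flr_div (x : R) (n : nat) : 0 <= x -> (0 < n)%N ->
  flr (x / n%:R) = (flr x %/ n)%N.
Proof.
move=> x0 n0; rewrite /flr.
have n0' : (0 : R) < n%:R by rewrite ltr0n.
have /andP[h1 h2] := truncn_itv x0.
set N := Num.truncn x in h1 h2 *.
apply: truncn_def; apply/andP; split.
  rewrite ler_pdivlMr //; apply: le_trans h1.
  by rewrite -natrM ler_nat leq_divM.
rewrite ltr_pdivrMr //; apply: (lt_le_trans h2).
by rewrite -natrM ler_nat ltn_ceil.
Qed.

Lemma cnt_ge (N m : nat) : (0 < m)%N ->
  \sum_(1 <= n < N.+1) ((m <= N %/ n)%N%:R : R) = (N %/ m)%:R.
Proof.
move=> m0.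
transitivity (\sum_(1 <= n < N.+1) ((n <= N %/ m)%N%:R : R)).
  apply: eq_big_seq => n; rewrite mem_index_iota => /andP[n1 _].
  by rewrite !leq_divRL // mulnC.
have K1 : (1 <= (N %/ m).+1)%N by [].
have K2 : ((N %/ m).+1 <= N.+1)%N by rewrite ltnS leq_div.
rewrite (@big_cat_nat _ _ _ (N %/ m).+1 1 N.+1) //=.
rewrite [X in _ + X]big1_seq ?addr0; last first.
  move=> n /andP[_]; rewrite mem_index_iota => /andP[h _].
  by rewrite leqNgt h.
rewrite (eq_big_seq (fun _ => 1)); last first.
  by move=> n; rewrite mem_index_iota => /andP[_ h]; rewrite -ltnS h.
by rewrite sumr_const_nat subn1.
Qed.

Lemma cnt_eq (N m : nat) : (0 < m)%N ->
  \sum_(1 <= n < N.+1) ((N %/ n == m)%N%:R : R) = (N %/ m)%:R - (N %/ m.+1)%:R.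
Proof.
move=> m0; rewrite -cnt_ge // -cnt_ge // -sumrB.
apply: eq_bigr => n _.
by case: (ltngtP (N %/ n) m) => h; rewrite ?(ltnW h) ?(leqNgt m) ?h ?ltnS ?(leqNgt m.+1) ?ltnS ?h //=;
  rewrite ?subrr ?subr0 //; move: h; rewrite ?h; lia.
Qed.

Lemma S_ident (F : nat -> R) (N : nat) :
  \sum_(1 <= n < N.+1) F (N %/ n)%N =
  \sum_(1 <= m < N.+1) F m * ((N %/ m)%:R - (N %/ m.+1)%:R).
Proof.
transitivity (\sum_(1 <= n < N.+1) \sum_(1 <= m < N.+1)
                 (if m == (N %/ n)%N then F m else 0)).
  apply: eq_big_seq => n; rewrite mem_index_iota => /andP[n1 nN].
  rewrite (eq_bigr (fun m => if m == (N %/ n)%N then F (N %/ n)%N else 0)); last first.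
    by move=> m _; case: eqP => // ->.
  rewrite sum_nat_eq1 // ltnS leq_div andbT.
  by rewrite leq_divRL // mul1n -ltnS.
rewrite exchange_big_nat /=.
apply: eq_big_seq => m; rewrite mem_index_iota => /andP[m1 _].
rewrite -cnt_eq // mulr_sumr; apply: eq_bigr => n _.
by rewrite eq_sym; case: eqP => _; rewrite ?mulr1 ?mulr0.
Qed.
End Comb.
Section Main.
Variable R : realType.
Local Notation f m := (vonMangoldt R (m ^ 2 + 1)%N).

Lemma div_bounds (N d : nat) : (0 < d)%N ->
  (N %/ d)%:R <= (N%:R / d%:R : R) /\ (N%:R / d%:R : R) < (N %/ d)%:R + 1.
Proof.
move=> d0; have d0' : (0 : R) < d%:R by rewrite ltr0n.
split; first by rewrite ler_pdivlMr // -natrM ler_nat leq_divM.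
by rewrite ltr_pdivrMr // natr1 -natrM ltr_nat ltn_ceil.
Qed.

Lemma AN_eq N : A R N = \sum_(1 <= m < N.+1) a2_term R m.
Proof. by rewrite /A /series /= big_add1. Qed.

Lemma f_leL (N m : nat) : (0 < m)%N -> (m <= N)%N -> f m <= 1 + 2 * ln (N%:R : R).
Proof.
move=> m0 mN; apply: (le_trans (f_le R m m0)).
have : ln (m%:R : R) <= ln (N%:R) by rewrite ler_ln ?posrE ?ltr0n ?ler_nat // (leq_trans m0).
lra.
Qed.

Lemma sum_bound (a b : nat) (F : nat -> R) (B : R) :
  (forall m, (a <= m < b)%N -> `|F m| <= B) ->
  `|\sum_(a <= m < b) F m| <= B * (b - a)%:R.
Proof.
move=> H; apply: (le_trans (ler_norm_sum _ _ _)).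
rewrite (_ : B * (b - a)%:R = \sum_(a <= i < b) B); last by rewrite sumr_const_nat mulr_natr.
apply: ler_sum_nat; exact: H.
Qed.

Lemma sum_nat_ge0 (a b : nat) (F : nat -> R) :
  (forall m, (a <= m < b)%N -> 0 <= F m) -> 0 <= \sum_(a <= m < b) F m.
Proof.
move=> H; apply: (le_trans _ (ler_sum_nat H)); by rewrite big1.
Qed.

Lemma absB_le (x y B : R) : 0 <= x -> 0 <= y -> x <= B -> y <= B -> `|x - y| <= B.
Proof. by move=> *; rewrite ler_norml; apply/andP; split; lra. Qed.

Lemma abs3 (x y t a b d : R) : `|x| <= a -> `|y| <= b -> 0 <= t -> t <= d ->
  `|x + y - t| <= a + b + d.
Proof.
rewrite !ler_norml => /andP[? ?] /andP[? ?] *; apply/andP; split; lra.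
Qed.

Lemma main_gen (N M : nat) : (0 < N)%N -> (M <= N)%N ->
  `| \sum_(1 <= n < N.+1) f (N %/ n)%N - N%:R * limn (A R) |
    <= (1 + 2 * ln (N%:R : R)) * M%:R
       + (1 + 2 * ln (N%:R : R)) * (N%:R / M.+1%:R) + (4 + 2 * ln (N.+1%:R : R)).
Proof.
move=> N0 MN.
set L := 1 + 2 * ln (N%:R : R).
set c := fun m : nat => ((N %/ m)%:R - (N %/ m.+1)%:R : R).
set w := fun m : nat => (N%:R / (m * m.+1)%:R : R).
have L0 : 0 <= L by have := ln_nat_ge0 R N; rewrite /L; lra.
have wE : forall m, (0 < m)%N -> w m = N%:R / m%:R - N%:R / m.+1%:R.
  move=> m m0; rewrite /w natrM -addn1 natrD; field.
  by rewrite !gt_eqF ?ltr0n // ltr_pwDl.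
have Sdec : \sum_(1 <= n < N.+1) f (N %/ n)%N - N%:R * A R N
    = \sum_(1 <= m < N.+1) f m * (c m - w m).
  rewrite (@S_ident R (fun m => f m) N) AN_eq mulr_sumr -sumrB; apply: eq_bigr => m _.
  rewrite /a2_term /c /w; ring.
have M1 : (1 <= M.+1)%N by [].
have M2 : (M.+1 <= N.+1)%N by [].
rewrite [in RHS](@big_cat_nat _ _ _ M.+1 1 N.+1) //= in Sdec.
have PI : `| \sum_(1 <= m < M.+1) f m * (c m - w m) | <= L * M%:R.
  have -> : (M%:R : R) = (M.+1 - 1)%:R by rewrite subn1.
  apply: sum_bound => m /andP[m1 mM].
  have mN : (m <= N)%N by apply: leq_trans MN.
  have := f_leL N m m1 mN; have := f_ge0 R m; rewrite -/L => f0 fL.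
  have [a1 a2] := div_bounds N m m1.
  have [b1 b2] := div_bounds N m.+1 (ltn0Sn m).
  have H : `|c m - w m| <= 1.
    rewrite /c /= wE // ler_norml.
    move: a1 a2 b1 b2; generalize (N%:R / m%:R : R) (N%:R / m.+1%:R : R)
      ((N %/ m)%:R : R) ((N %/ m.+1)%:R : R) => u v q1 q2 *.
    apply/andP; split; lra.
  rewrite normrM ger0_norm //.
  by apply: (le_trans (ler_wpM2l f0 H)); rewrite mulr1.
have MN1 : (0 < M.+1)%N by [].
have Y0 : 0 <= (N%:R / M.+1%:R : R) by rewrite divr_ge0.
have c0 : forall m, (0 < m)%N -> 0 <= c m.
  by move=> m m0; rewrite /c /= subr_ge0 ler_nat leq_div2l.
have w0 : forall m, 0 <= w m by move=> m; rewrite /w divr_ge0.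
have sumc : \sum_(M.+1 <= m < N.+1) c m = (N %/ M.+1)%:R.
  have := telescope_sumr (fun k => - ((N %/ k)%:R : R)) M2.
  rewrite (divn_small (ltnSn N)) => H.
  rewrite (eq_bigr (fun k => - ((N %/ k.+1)%:R : R) - - ((N %/ k)%:R))).
    by rewrite H oppr0 sub0r opprK.
  by move=> k _; rewrite /c /= opprK addrC.
have sumw : \sum_(M.+1 <= m < N.+1) w m <= N%:R / M.+1%:R.
  have := telescope_sumr (fun k => - (N%:R / k%:R : R)) M2 => H.
  rewrite (eq_big_seq (fun k => - (N%:R / k.+1%:R : R) - - (N%:R / k%:R))).
    rewrite H; have : (0 : R) <= N%:R / N.+1%:R by rewrite divr_ge0.
    move: (N%:R / N.+1%:R : R) (N%:R / M.+1%:R : R) => u v; lra.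
  move=> k; rewrite mem_index_iota => /andP[k1 _]; rewrite wE; last exact: leq_trans k1.
  by rewrite opprK addrC.
have PII : `| \sum_(M.+1 <= m < N.+1) f m * (c m - w m) | <= L * (N%:R / M.+1%:R).
  under eq_bigr do rewrite mulrBr.
  rewrite sumrB.
  have sc0 : 0 <= \sum_(M.+1 <= m < N.+1) f m * c m.
    apply: sum_nat_ge0 => m /andP[m1 _]; apply: mulr_ge0; first exact: f_ge0.
    by apply: c0; apply: leq_trans m1.
  have sw0 : 0 <= \sum_(M.+1 <= m < N.+1) f m * w m.
    by apply: sum_nat_ge0 => m _; apply: mulr_ge0; [exact: f_ge0|exact: w0].
  have sc1 : \sum_(M.+1 <= m < N.+1) f m * c m <= L * (N%:R / M.+1%:R).
    apply: (@le_trans _ _ (\sum_(M.+1 <= m < N.+1) L * c m)).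
      apply: ler_sum_nat => m /andP[m1 m2]; apply: ler_wpM2r.
        by apply: c0; apply: leq_trans m1.
      by apply: f_leL; [apply: leq_trans m1|rewrite -ltnS].
    rewrite -mulr_sumr sumc; apply: ler_wpM2l => //.
    by have [] := div_bounds N M.+1 MN1.
  have sw1 : \sum_(M.+1 <= m < N.+1) f m * w m <= L * (N%:R / M.+1%:R).
    apply: (@le_trans _ _ (\sum_(M.+1 <= m < N.+1) L * w m)).
      apply: ler_sum_nat => m /andP[m1 m2]; apply: ler_wpM2r => //.
      by apply: f_leL; [apply: leq_trans m1|rewrite -ltnS].
    by rewrite -mulr_sumr; apply: ler_wpM2l.
  exact: absB_le sc0 sw0 sc1 sw1.
have T1 := A_le_lim R N.
have T2 := lim_le R N.
have Tg : N%:R * g R N.+1 <= 4 + 2 * ln (N.+1%:R : R).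
  rewrite /g mulrA ler_pdivrMr ?ltr0n // -natr1.
  have := ln_nat_ge0 R N.+1; rewrite -natr1.
  move: (ln (N%:R + 1 : R)) => l l0.
  have : (0 : R) <= N%:R by [].
  nra.
have Tn0 : 0 <= N%:R * (limn (A R) - A R N).
  by apply: mulr_ge0 => //; rewrite subr_ge0.
have Tn1 : N%:R * (limn (A R) - A R N) <= N%:R * g R N.+1.
  by apply: ler_wpM2l => //; rewrite lerBlDl.
have -> : \sum_(1 <= n < N.+1) f (N %/ n)%N - N%:R * limn (A R)
   = (\sum_(1 <= n < N.+1) f (N %/ n)%N - N%:R * A R N) - N%:R * (limn (A R) - A R N).
  by rewrite mulrBr opprB addrA subrK.
rewrite Sdec; apply: abs3 => //.
exact: le_trans Tn1 Tg.
Qed.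
End Main.
Section Final.
Variable R : realType.
Local Notation f m := (vonMangoldt R (m ^ 2 + 1)%N).

Lemma ln2_ge : (1 / 2 : R) <= ln 2.
Proof.
have := @ln_lb R 2 1 (ltr0Sn _ _) ltr01; rewrite ln1.
have -> : (1 / 2 : R) = 2^-1 by rewrite mul1r.
lra.
Qed.

Lemma a2_bounds : 0 <= limn (A R) <= 4.
Proof.
have h1 := A_le_lim R 0; have h2 := lim_le R 0.
have h0 : A R 0 = 0 by rewrite /A /series /= big_geq.
have g1 : g R 1 = 4 by rewrite /g ln1 divr1; lra.
rewrite h0 g1 in h1 h2; apply/andP; split; lra.
Qed.

Lemma asym (x : R) : 4 <= x ->
  `|S2 x - limn (A R) * x| <= 18 * (Num.sqrt x * (ln x) ^+ 2).
Proof.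
move=> x4.
have x0 : 0 <= x by lra.
have x0' : 0 < x by lra.
set N := flr x.
have N4 : (4 <= N)%N by rewrite /N /flr truncn_ge_nat.
have N0 : (0 < N)%N by apply: leq_trans N4.
have /andP[Nx xN] := truncn_itv x0.
rewrite -/(flr x) -/N in Nx xN.
have SE : S2 x = \sum_(1 <= n < N.+1) f (N %/ n)%N.
  rewrite /S2 -/N; apply: eq_big_seq => n; rewrite mem_index_iota => /andP[n1 _].
  by rewrite flr_div.
set s := Num.sqrt (N%:R : R).
have s0 : 0 <= s := sqrtr_ge0 _.
have ss : s * s = N%:R by rewrite -expr2 sqr_sqrtr.
set M := Num.truncn s.
have /andP[Ms sM] := truncn_itv s0.
rewrite -/M in Ms sM.
have MN : (M <= N)%N.
  rewrite -(ler_nat R); apply: (le_trans Ms).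
  have : (1 : R) <= N%:R by rewrite ler1n.
  nra.
have key := main_gen R N M N0 MN.
set L := 1 + 2 * ln (N%:R : R) in key.
have lN : ln (N%:R : R) <= (ln x) by rewrite ler_ln ?posrE ?ltr0n.
have lN0 := ln_nat_ge0 R N.
have l1 : 1 <= (ln x).
  have : ln (4 : R) <= (ln x) by rewrite ler_ln ?posrE //; lra.
  have -> : (4 : R) = 2 ^+ 2 by rewrite expr2; lra.
  rewrite lnXn //; have := ln2_ge; lra.
have lN1 : ln (N.+1%:R : R) <= 1 + (ln x).
  have : ln (N.+1%:R : R) <= ln (2 * x).
    rewrite ler_ln ?posrE ?ltr0n ?mulr_gt0 //; lra.
  rewrite lnM ?posrE //; have := ln2_le1 R; lra.
set r := Num.sqrt x.
have sr : s <= r by rewrite ler_sqrt.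
have r1 : 1 <= r by rewrite -sqrtr1 ler_sqrt //; lra.
have L0 : 0 <= L by rewrite /L; lra.
have LM : L * M%:R <= (1 + 2 * (ln x)) * r.
  apply: ler_pM; [exact: L0 | exact: ler0n | rewrite /L; lra | exact: le_trans Ms sr].
have LN : L * (N%:R / M.+1%:R) <= (1 + 2 * (ln x)) * r.
  apply: ler_pM; [exact: L0 | by rewrite divr_ge0 | rewrite /L; lra | ].
  apply: le_trans sr; rewrite ler_pdivrMr ?ltr0n // -ss.
  by apply: ler_wpM2l => //; apply: ltW.
have [a0 a4] := andP a2_bounds.
set a := limn (A R) in a0 a4 key *.
have E : `|S2 x - a * x| <= `|\sum_(1 <= n < N.+1) f (N %/ n)%N - N%:R * a| + a.
  rewrite SE.
  have -> : \sum_(1 <= n < N.+1) f (N %/ n)%N - a * x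
     = (\sum_(1 <= n < N.+1) f (N %/ n)%N - N%:R * a) - a * (x - N%:R).
    by ring.
  apply: (le_trans (ler_normB _ _)); apply: lerD => //.
  rewrite normrM ger0_norm // ger0_norm; last by lra.
  have : x - N%:R <= 1 by lra.
  move=> h; rewrite -[X in _ <= X]mulr1; apply: ler_wpM2l => //.
apply: (le_trans E).
move: key LM LN lN1 l1 r1 a4; rewrite -/L.
move: (L * M%:R) (L * (N%:R / M.+1%:R)) => u v.
move: (`|_|) => z.
move: (ln x) (ln (N.+1%:R : R)) => l l' *.
have h1 : r <= r * l by nra.
have h2 : r * l <= r * l ^+ 2 by rewrite expr2; nra.
have h3 : l <= r * l by nra.
nra.
Qed.
End Final.
Section Num.
Variable R : realType.

Lemma term_ge0 n : 0 <= a2_term R n.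
Proof. by rewrite /a2_term divr_ge0 // vM_ge0. Qed.

Lemma term_prime n p d : (n ^ 2 + 1 = p)%N -> (n * n.+1 = d)%N -> prime p ->
  a2_term R n = ln (p%:R : R) / d%:R.
Proof. by rewrite /a2_term => -> -> pp; rewrite -{1}(expn1 p) vM_pow. Qed.

Lemma ln_lb_pow (a b : R) (m n : nat) : 0 < a -> 0 < b ->
  1 - b ^+ n / a ^+ m <= ln a * m%:R - ln b * n%:R.
Proof.
move=> a0 b0.
have := @ln_lb R _ _ (exprn_gt0 m a0) (exprn_gt0 n b0).
by rewrite (lnXn m a0) (lnXn n b0) !mulr_natr.
Qed.

Lemma ln_p_lb p q j : (0 < p)%N -> (2 ^ j = q)%N ->
  ln (2:R) * j%:R + 1 - q%:R / p%:R <= ln (p%:R : R).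
Proof.
move=> p0 <-.
have p0' : (0:R) < p%:R by rewrite ltr0n.
have t2 : (0:R) < 2 by [].
have := @ln_lb_pow _ _ 1 j p0' t2.
rewrite natrX expr1 mulr1; lra.
Qed.

Lemma ln2_lb : (6766 / 10000 : R) <= ln (2:R).
Proof.
have t3 : (0:R) < 3 by [].
have t2 : (0:R) < 2 by [].
have h1 := @ln_lb_pow 3 2 12 19 t3 t2.
have h2 := @ln_lb_pow 2 3 8 5 t2 t3.
lra.
Qed.

Lemma A24_lb : (9001 / 10000 : R) <= A R 24.
Proof.
rewrite /A /series /=.
rewrite !big_nat_recr //= big_geq // add0r.
rewrite (@term_prime 1 2 2) //.
rewrite (@term_prime 2 5 6) //.
rewrite (@term_prime 4 17 20) //.
rewrite (@term_prime 6 37 42) //.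
rewrite (@term_prime 10 101 110) //.
rewrite (@term_prime 14 197 210) //.
rewrite (@term_prime 16 257 272) //.
rewrite (@term_prime 20 401 420) //.
rewrite (@term_prime 24 577 600) //.
have := @ln_p_lb 5 4 2 erefl erefl.
have := @ln_p_lb 17 16 4 erefl erefl.
have := @ln_p_lb 37 32 5 erefl erefl.
have := @ln_p_lb 101 64 6 erefl erefl.
have := @ln_p_lb 197 128 7 erefl erefl.
have := @ln_p_lb 257 256 8 erefl erefl.
have := @ln_p_lb 401 256 8 erefl erefl.
have := @ln_p_lb 577 512 9 erefl erefl.
have := term_ge0 3.
have := term_ge0 5.
have := term_ge0 7.
have := term_ge0 8.
have := term_ge0 9.
have := term_ge0 11.
have := term_ge0 12.
have := term_ge0 13.
have := term_ge0 15.
have := term_ge0 17.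
have := term_ge0 18.
have := term_ge0 19.
have := term_ge0 21.
have := term_ge0 22.
have := term_ge0 23.
have := ln2_lb.
lra.
Qed.
End Num.
Lemma e1 : (900076 = (9*10*10*10*10 + 7)*10 + 6)%N.
Proof. cbv -[Nat.tail_mul muln addn]. rewrite !Nat.tail_mul_spec. lia. Qed.
Lemma e2 : (1000000 = 10*10*10*10*10*10)%N.
Proof. cbv -[Nat.tail_mul muln addn]. rewrite !Nat.tail_mul_spec. lia. Qed.
Lemma r1 (R : realType) : (900076%:R : R) = (9*10*10*10*10 + 7)*10 + 6.
Proof. rewrite -!natrM -!natrD -!natrM -!natrD. exact: (congr1 _ e1). Qed.
Lemma r2 (R : realType) : (1000000%:R : R) = 10*10*10*10*10*10.
Proof. rewrite -!natrM. exact: (congr1 _ e2). Qed.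
Lemma const_le (R : realType) (a : R) : 9001 / 10000 <= a -> (900076%:R / 1000000%:R : R) <= a.
Proof.
move=> h.
have aux : forall x y x1 y1 : R, x = x1 -> y = y1 -> x1 / y1 <= a -> x / y <= a by move=> ????->->.
apply: (aux _ _ _ _ (r1 R) (r2 R)); lra.
Qed.

Theorem theorem1p3 (R : realType) :
  let a2 : R := limn (series (fun n => a2_term R n.+1) : R^nat) in
  [/\ cvgn (series (fun n => a2_term R n.+1) : R^nat),
      (900076%:R / 1000000%:R : R) <= a2
    & forall eps : R, 0 < eps ->
        exists C : R, exists X0 : R, forall x : R, X0 <= x ->
          `|S2 x - a2 * x| <= C * (x `^ ((2 + eps) / 3) * (ln x) ^+ 2)].
Proof.
move=> a2; split.
- exact: (A_cvg R).
- apply: const_le; apply: le_trans (A24_lb R) (A_le_lim R 24).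
- move=> eps eps0; exists 18, 4 => x x4.
  apply: le_trans (@asym R x x4) _.
  apply: ler_wpM2l => //; apply: ler_wpM2r; first exact: sqr_ge0.
  have x0 : 0 <= x by lra.
  rewrite -powR12_sqrt //; apply: ler_powR; first lra.
  lra.
Qed.
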